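(* For every instance of (weighted) Maximum Coverage in which every set in $\mathcal{R}$ has cardinality at most $r$, the greedy algorithm outputs $k$ sets whose union has weight at least $\left(1-(1-1/r)^r\right)$ times the optimum weight.
   Context: An instance of weighted Maximum Coverage is $({U},\mathcal{R},k)$ with ${U}$ finite, $\mathcal{R}$ a collection of subsets of ${U}$, $k$ a positive integer, and weights $w:{U}\to\mathbb{R}_{\ge0}$, with $w(S)=\sum_{x\in S}w(x)$; the goal is to choose $k$ sets of $\mathcal{R}$ maximizing the weight of their union. The greedy algorithm chooses $k$ sets sequentially, each new set maximizing the weight of the elements it covers that are not covered by previously chosen sets (ties broken arbitrarily). *)

(* Defs.v *)
From HB Require Import structures.
From mathcomp Require Import all_boot all_order all_algebra.
Set Implicit Arguments. Unset Strict Implicit. Unset Printing Implicit Defensive.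
Import Order.TTheory GRing.Theory Num.Theory.
Local Open Scope ring_scope.

Definition weight (R : numDomainType) (U : finType) (w : U -> R) (S : {set U}) : R :=
  \sum_(x in S) w x.

Definition union_seq (U : finType) (s : seq {set U}) : {set U} :=
  \bigcup_(S <- s) S.

Definition greedy_output (R : numDomainType) (U : finType) (w : U -> R)
    (Rc : {set {set U}}) (k : nat) (s : seq {set U}) : Prop :=
  size s = k /\
  forall i : nat, (i < k)%N ->
    nth set0 s i \in Rc /\
    forall T : {set U}, T \in Rc ->
      weight w (T :\: union_seq (take i s))
        <= weight w (nth set0 s i :\: union_seq (take i s)).

Definition is_k_selection (U : finType) (Rc : {set {set U}}) (k : nat) (s : seq {set U}) : Prop :=
  size s = k /\ all (fun S => S \in Rc) s.

(* Main.v *)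
Require Import Defs.
From HB Require Import structures.
From mathcomp Require Import all_boot all_order all_algebra.
From mathcomp Require Import ring lra zify.
Import Order.TTheory GRing.Theory Num.Theory.
Local Open Scope ring_scope.
Section AMGM.
Variable R : realFieldType.

Lemma sum_compl_size (s : seq R) :
  \sum_(x <- s) (1 - x) = (size s)%:R - \sum_(x <- s) x.
Proof.
elim: s => [|x s IH]; first by rewrite !big_nil subr0.
rewrite !big_cons IH /= -addn1 natrD; lra.
Qed.

Lemma amgm_exact (n : nat) (s : seq R) :
  size s = n -> all (fun x => 0 <= x <= 1) s ->
  (\prod_(x <- s) x) * \sum_(x <- s) (1 - x) <= (n%:R / (n.+1)%:R) ^+ n.+1.
Proof.
move=> sz hall.
pose E (i : 'I_n.+1) : R := if (i < n)%N then nth 0 s i else \sum_(x <- s) (1 - x).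
have hE : {in 'I_n.+1, forall i, 0 <= E i}.
  move=> i _; rewrite /E; case: ifP => hi.
    by move: (hall) => /(all_nthP 0) /(_ i); rewrite sz hi => /(_ isT) /andP[].
  rewrite sum_compl_size subr_ge0.
  elim: (s) (hall) => [|x t IH] /=; first by rewrite big_nil.
  move=> /andP[/andP[_ x1] /IH]; rewrite big_cons -addn1 natrD; lra.
have := leif_AGM hE.
rewrite card_ord.
have -> : \prod_(i in 'I_n.+1) E i = (\prod_(x <- s) x) * \sum_(x <- s) (1 - x).
  rewrite big_ord_recr /= /E ltnn; congr (_ * _).
  rewrite [RHS](big_nth 0) big_mkord sz; apply: eq_bigr => i _.
  by rewrite /= ltn_ord.
have -> : \sum_(i in 'I_n.+1) E i = n%:R.
  rewrite big_ord_recr /= /E ltnn.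
  have -> : \sum_(i < n) (if (widen_ord (leqnSn n) i < n)%N then nth 0 s (widen_ord (leqnSn n) i) else \sum_(x <- s) (1 - x)) = \sum_(x <- s) x.
    rewrite [RHS](big_nth 0) big_mkord sz; apply: eq_bigr => i _.
    by rewrite /= ltn_ord.
  by rewrite sum_compl_size sz addrC subrK.
by case.
Qed.

Lemma amgm_seq (s : seq R) (n : nat) :
  (size s <= n)%N -> all (fun x => 0 <= x <= 1) s ->
  (\prod_(x <- s) x) * \sum_(x <- s) (1 - x) <= (n%:R / (n.+1)%:R) ^+ n.+1.
Proof.
move=> sz hall.
pose t := s ++ nseq (n - size s) 1.
have ht : size t = n by rewrite size_cat size_nseq subnKC.
have hallt : all (fun x => 0 <= x <= 1) t.
  rewrite all_cat hall /=; apply/allP => x /nseqP [-> _]; by rewrite ler01 lexx.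
have := amgm_exact _ _ ht hallt.
rewrite /t big_cat big_cat /= !big_nseq.
have -> : iter (n - size s)%N (fun x => 1 * x) 1 = 1 :> R.
  by elim: (n - size s)%N => //= m ->; rewrite mulr1.
have -> : iter (n - size s)%N (fun x => (1 - 1) + x) 0 = 0 :> R.
  by elim: (n - size s)%N => //= m ->; rewrite subrr addr0.
by rewrite mulr1 addr0.
Qed.
End AMGM.
Lemma max_sub (R : realFieldType) (a b E : R) : b <= a -> Num.max a E - Num.max b E <= a - b.
Proof. by move=> h; case: (lerP a E) => h0; case: (lerP b E) => h1; lra. Qed.
Lemma max_fin (R : realFieldType) (a E y : R) : y <= E -> y <= a -> Num.max a E <= a + E - y.
Proof. by move=> h1 h2; case: (lerP a E) => h0; lra. Qed.

Section Part.
Variable R : realFieldType.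
Variable E : R.
Hypothesis E0 : 0 <= E.

Lemma part_bound (n : nat) : forall (rho g : nat -> R) (m : nat -> nat),
  (forall i, (i < n)%N -> rho i.+1 <= rho i) ->
  (forall i, 0 <= rho i) ->
  (forall i, (i < n)%N -> rho i <= g i) ->
  (forall i, (i < n)%N -> E <= g i) ->
  rho n <= E ->
  (forall i, (i < n)%N -> rho i.+1 < rho i -> (m i.+1 < m i)%N) ->
  (forall i, (i < n)%N -> (m i.+1 <= m i)%N) ->
  (forall i, 0 < rho i -> (0 < m i)%N) ->
  exists s : seq R, [/\ (size s <= (m 0%N).-1)%N, all (fun x => 0 <= x <= 1) s,
     E <= Num.max (rho 0%N) E * \prod_(x <- s) x &
     Num.max (rho 0%N) E - E * \sum_(x <- s) (1 - x) <=
       (rho 0%N - rho n) + E - E * \sum_(i < n) ((rho i - rho i.+1) / g i)].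
Proof.
elim: n => [|n IH] rho g m hmono hpos hg hE hend hdrop hm hm0.
  exists [::]; split => //; rewrite ?big_nil ?big_ord0 ?mulr1 ?mulr0 ?subr0 ?subrr ?add0r.
    by rewrite le_max lexx orbT.
  by rewrite max_r.
have [s' [hs1 hs2 hs3 hs4]] := IH (fun i => rho i.+1) (fun i => g i.+1) (fun i => m i.+1)
  (fun i hi => hmono i.+1 hi) (fun i => hpos i.+1) (fun i hi => hg i.+1 hi)
  (fun i hi => hE i.+1 hi) hend (fun i hi => hdrop i.+1 hi) (fun i hi => hm i.+1 hi)
  (fun i => hm0 i.+1).
rewrite big_ord_recl /=.
set Sr := \sum_(i < n) _.
have hSr : Sr = \sum_(i < n) ((rho i.+1 - rho i.+2) / g i.+1) by [].
set d := rho 0%N - rho 1%N.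
have hd0 : 0 <= d by rewrite subr_ge0 hmono.
have hg0 : rho 0%N <= g 0%N := hg 0%N isT.
have hE0 : E <= g 0%N := hE 0%N isT.
set s0 := Num.max (rho 0%N) E.
set s1 := Num.max (rho 1%N) E.
have hs0r : rho 0%N <= s0 by rewrite le_max lexx.
have hs0E : E <= s0 by rewrite le_max lexx orbT.
have hs1r : rho 1%N <= s1 by rewrite le_max lexx.
have hs1E : E <= s1 by rewrite le_max lexx orbT.
have hs01 : s1 <= s0.
  rewrite ge_max (le_trans (hmono 0%N isT) hs0r) hs0E //.
have hsd : s0 - s1 <= d.
  by rewrite /s0 /s1 /d; apply: max_sub; apply: hmono.
have hfull : rho 0%N - rho n.+1 + E - E * ((rho 0%N - rho 1%N) / g 0%N + Sr)
   = (d - E * (d / g 0%N)) + (rho 1%N - rho n.+1 + E - E * Sr).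
  by rewrite /d; ring.
rewrite hfull.
have [hnd | hdrop0] := eqVneq d 0.
  have h01 : rho 0%N = rho 1%N by apply/eqP; rewrite -subr_eq0; apply/eqP.
  exists s'; split => //.
  - by have := hm 0%N isT; move: hs1; clear; lia.
  - have -> : s0 = s1 by rewrite /s0 /s1; rewrite h01.
    exact: hs3.
  - rewrite hnd mul0r mulr0 subr0 add0r.
    have -> : s0 = s1 by rewrite /s0 /s1; rewrite h01.
    exact: hs4.
have hlt : rho 1%N < rho 0%N by rewrite lt_def hmono // andbT; move: hdrop0; rewrite /d subr_eq0 eq_sym.
have hmlt := hdrop 0%N isT hlt.
have hs0p : 0 < s0 by apply: lt_le_trans hs0r; apply: le_lt_trans hlt.
have hgp : 0 < g 0%N by apply: lt_le_trans hg0; apply: le_lt_trans hlt.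
set v := d / s0.
have hv : v * s0 = d by rewrite /v divfK // gt_eqF.
have hv0 : 0 <= v by rewrite /v divr_ge0 // ltW.
have huv : E * (d / g 0%N) <= E * v.
  apply: ler_wpM2l => //; rewrite ler_pdivrMr //.
  have : v * s0 <= v * g 0%N by apply: ler_wpM2l => //; rewrite ge_max hg0 hE0.
  by rewrite hv.
set x := E / s0.
have hx : x * s0 = E by rewrite /x divfK // gt_eqF.
have hx0 : 0 <= x by rewrite /x divr_ge0 // ltW.
have hx1 : x <= 1 by rewrite /x ler_pdivrMr // mul1r.
have hEv : E * v = x * d.
  by rewrite -hx -hv; ring.
case: (posnP (m 1%N)) => hm1.
  have hr1 : rho 1%N = 0.
    apply/eqP; rewrite eq_le hpos andbT leNgt; apply/negP => /hm0; by rewrite hm1.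
  have hs'0 : s' = [::] by case: s' hs1 {hs2 hs3 hs4} => //; rewrite hm1.
  exists [::]; split => //.
  - by rewrite big_nil mulr1.
  - rewrite big_nil mulr0 subr0.
    move: hs4; rewrite hs'0 big_nil mulr0 subr0 /s1 hr1 => hs4.
    have h1 : Num.max 0 E = E by rewrite max_r.
    rewrite h1 in hs4.
    have hdv : d = rho 0%N by rewrite /d hr1 subr0.
    have hEd1 : E * (d / g 0%N) <= E.
      rewrite -[X in _ <= X]mulr1; apply: ler_wpM2l => //.
      by rewrite ler_pdivrMr // mul1r hdv.
    have hEd2 : E * (d / g 0%N) <= d.
      rewrite mulrA ler_pdivrMr // mulrC; apply: ler_wpM2l => //.
    have hmx : s0 <= d + E - E * (d / g 0%N) by rewrite /s0 -hdv; exact: max_fin.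
    rewrite hSr; move: hmx hs4; clear; lra.
have hs1p : 0 <= s1 by apply: le_trans hs1E.
exists ((s1 / s0) :: s'); split.
- by rewrite /=; move: hs1 hmlt hm1; clear; lia.
- rewrite /= hs2 andbT divr_ge0 ?(ltW hs0p) //= ler_pdivrMr // mul1r //.
- rewrite big_cons mulrA mulrCA divff ?gt_eqF // mulr1 //.
- rewrite big_cons.
  have hq : E * (1 - s1 / s0 + \sum_(x0 <- s') (1 - x0)) = E - x * s1 + E * \sum_(x0 <- s') (1 - x0).
    by rewrite -hx; field; rewrite gt_eqF.
  rewrite hq.
  have key : s0 - (E - x * s1) <= d - E * v + s1.
    rewrite hEv -hx.
    have : (1 - x) * (s0 - s1) <= (1 - x) * d by apply: ler_wpM2l; rewrite ?subr_ge0.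
    clear; lra.
  rewrite hSr; move: key huv hs4; rewrite -/s1; clear; lra.
Qed.
Lemma part_final (r' n : nat) (rho g : nat -> R) (m : nat -> nat) :
  (forall i, (i < n)%N -> rho i.+1 <= rho i) ->
  (forall i, 0 <= rho i) ->
  (forall i, (i < n)%N -> rho i <= g i) ->
  (forall i, (i < n)%N -> E <= g i) ->
  rho n <= E ->
  (forall i, (i < n)%N -> rho i.+1 < rho i -> (m i.+1 < m i)%N) ->
  (forall i, (i < n)%N -> (m i.+1 <= m i)%N) ->
  (forall i, 0 < rho i -> (0 < m i)%N) ->
  (m 0%N <= r'.+1)%N ->
  (1 - (1 - (r'.+1)%:R^-1) ^+ r'.+1) * rho 0%N <=
  (rho 0%N - rho n) + E - E * \sum_(i < n) ((rho i - rho i.+1) / g i).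
Proof.
move=> h1 h2 h3 h4 h5 h6 h7 h8 hmr.
have [s [hs1 hs2 hs3 hs4]] := part_bound n rho g m h1 h2 h3 h4 h5 h6 h7 h8.
have hsz : (size s <= r')%N by move: hs1 hmr; clear; lia.
have ha := @amgm_seq R s r' hsz hs2.
have hn : (r'.+1)%:R = r'%:R + 1 :> R by rewrite -addn1 natrD.
have hc : 1 - (r'.+1)%:R^-1 = r'%:R / (r'.+1)%:R :> R.
  by rewrite hn; field; rewrite -hn pnatr_eq0.
rewrite hc.
set a := (r'%:R / (r'.+1)%:R) ^+ r'.+1.
move: ha hs3 hs4; rewrite -/a.
set sg := Num.max (rho 0%N) E.
set Ps := \prod_(x <- s) x.
set Ss := \sum_(x <- s) (1 - x).
move=> ha hs3 hs4.
have hSs : 0 <= Ss.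
  rewrite /Ss big_seq; apply: sumr_ge0 => x hx.
  by move/allP: hs2 => /(_ x hx) /andP[_ h]; rewrite subr_ge0.
have hsr : rho 0%N <= sg by rewrite le_max lexx.
have hsg0 : 0 <= sg by apply: le_trans (h2 0%N) hsr.
have ha1 : a <= 1.
  apply: exprn_ile1; first by apply: divr_ge0.
  by rewrite ler_pdivrMr ?ltr0n // mul1r ler_nat.
have hk1 : E * Ss <= sg * Ps * Ss by apply: ler_wpM2r.
have hk2 : sg * Ps * Ss <= sg * a by rewrite -mulrA; apply: ler_wpM2l.
have hk3 : (1 - a) * rho 0%N <= (1 - a) * sg by apply: ler_wpM2l => //; rewrite subr_ge0.
move: hk1 hk2 hk3 hs4; clear; lra.
Qed.
End Part.

Section Weights.
Variables (R : realFieldType) (U : finType) (w : U -> R).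
Hypothesis w0 : forall x, 0 <= w x.

Lemma weight_ge0 (S : {set U}) : 0 <= weight w S.
Proof. by apply: sumr_ge0 => x _; apply: w0. Qed.

Lemma weight_ID (A B : {set U}) : weight w A = weight w (A :&: B) + weight w (A :\: B).
Proof. by rewrite /weight (big_setID B). Qed.

Lemma weight_sub (A B : {set U}) : A \subset B -> weight w A <= weight w B.
Proof.
move=> hAB; rewrite (weight_ID B A) (setIidPr hAB) -[X in X <= _]addr0 lerD2l.
exact: weight_ge0.
Qed.

Lemma weight_set0 : weight w set0 = 0.
Proof. by rewrite /weight big_set0. Qed.

Lemma union_take0 (s : seq {set U}) : union_seq (take 0 s) = set0.
Proof. by rewrite /union_seq take0 big_nil. Qed.

Lemma union_takeS (s : seq {set U}) i : (i < size s)%N ->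
  union_seq (take i.+1 s) = union_seq (take i s) :|: nth set0 s i.
Proof. by move=> hi; rewrite /union_seq (take_nth set0 hi) big_rcons. Qed.
End Weights.

Lemma step_ineq (R : realFieldType) (D E gg : R) :
  0 <= D -> D <= gg -> 0 <= E -> E <= gg -> D + E - E * (D / gg) <= gg.
Proof.
move=> hD hDg hE hEg.
have [hg0|hgp] := eqVneq gg 0.
  rewrite hg0 in hDg hEg *.
  have -> : D = 0 by apply/eqP; rewrite eq_le hD hDg.
  have -> : E = 0 by apply/eqP; rewrite eq_le hE hEg.
  by rewrite !mul0r !(add0r, subr0, mulr0).
have hgp' : 0 < gg by rewrite lt_def hgp (le_trans hE hEg).
set t := D / gg.
have ht : D = t * gg by rewrite /t divfK.
have ht1 : t <= 1 by rewrite /t ler_pdivrMr // mul1r.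
have hp : 0 <= (gg - E) * (1 - t) by apply: mulr_ge0; rewrite subr_ge0.
rewrite ht; move: hp; clear -ht; nra.
Qed.

Section Main.
Variables (R : realFieldType) (U : finType) (Rc : {set {set U}}) (k : nat) (w : U -> R).
Hypothesis w0 : forall x, 0 <= w x.
Variables (g opt : seq {set U}).
Hypothesis hg : greedy_output w Rc k g.
Hypothesis ho : is_k_selection Rc k opt.

Definition G i := union_seq (take i g).
Definition gain i := weight w (nth set0 g i :\: G i).
Definition H j := union_seq (take j opt).
Definition P j := nth set0 opt j :\: H j.
Definition rho j i := weight w (P j :\: G i).

Lemma sizeg : size g = k. Proof. by case: hg. Qed.
Lemma sizeo : size opt = k. Proof. by case: ho. Qed.

Lemma GS i : (i < k)%N -> G i.+1 = G i :|: nth set0 g i.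
Proof. by move=> hi; rewrite /G union_takeS // sizeg. Qed.

Lemma G_sub i : (i < k)%N -> G i \subset G i.+1.
Proof. by move=> hi; rewrite GS // subsetUl. Qed.

Lemma greedy_i i : (i < k)%N -> nth set0 g i \in Rc /\
  forall T, T \in Rc -> weight w (T :\: G i) <= gain i.
Proof. by case: hg => _ /(_ i). Qed.

Lemma opt_in j : (j < k)%N -> nth set0 opt j \in Rc.
Proof.
case: ho => hs /(all_nthP set0) h hj; apply: h; by rewrite hs.
Qed.

Lemma gain_mono i : (i.+1 < k)%N -> gain i.+1 <= gain i.
Proof.
move=> hi; have hi' : (i < k)%N by apply: ltnW.
apply: le_trans (_ : weight w (nth set0 g i.+1 :\: G i) <= _).
  by apply: weight_sub => //; apply: setDS; apply: G_sub.
by apply: (greedy_i i hi').2; apply: (greedy_i i.+1 hi).1.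
Qed.

Lemma gain_ge_last i : (i < k)%N -> gain k.-1 <= gain i.
Proof.
move=> hi; have [d hd] : exists d, k.-1 = (i + d)%N by exists (k.-1 - i)%N; lia.
elim: d i hi hd => [|d IH] i hi hd; first by rewrite hd addn0.
apply: le_trans (IH i.+1 _ _) _; try lia.
apply: gain_mono; lia.
Qed.

Lemma gain_ge0 i : 0 <= gain i.
Proof. exact: weight_ge0. Qed.

Lemma rho_ge0 j i : 0 <= rho j i.
Proof. exact: weight_ge0. Qed.

Lemma rho_le_gain j i : (j < k)%N -> (i < k)%N -> rho j i <= gain i.
Proof.
move=> hj hi; apply: le_trans (_ : weight w (nth set0 opt j :\: G i) <= _).
  by apply: weight_sub => //; apply: setSD; apply: subsetDl.
by apply: (greedy_i i hi).2; apply: opt_in.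
Qed.

Lemma rho_mono j i : (i < k)%N -> rho j i.+1 <= rho j i.
Proof. by move=> hi; apply: weight_sub => //; apply: setDS; apply: G_sub. Qed.

Lemma drop_weight j i : (i < k)%N ->
  rho j i - rho j i.+1 = weight w (P j :&: (nth set0 g i :\: G i)).
Proof.
move=> hi; rewrite /rho (weight_ID _ _ w (P j :\: G i) (nth set0 g i)).
have -> : P j :\: G i :\: nth set0 g i = P j :\: G i.+1 by rewrite setDDl GS.
have -> : (P j :\: G i) :&: nth set0 g i = P j :&: (nth set0 g i :\: G i).
  by apply/setP => x; rewrite !inE; do ![case: (_ \in _)].
by rewrite addrK.
Qed.

Lemma H_sum (Y : {set U}) i : (i <= k)%N ->
  weight w (H i :&: Y) = \sum_(j < i) weight w (P j :&: Y).
Proof.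
elim: i => [|i IH] hi.
  by rewrite /H union_take0 set0I weight_set0 big_ord0.
rewrite big_ord_recr /= -IH ?(ltnW hi) //.
rewrite /H union_takeS ?sizeo // -/(H i).
rewrite (weight_ID _ _ w _ (H i)); congr (weight w _ + weight w _).
  by apply/setP => x; rewrite !inE; do ![case: (_ \in _)].
by apply/setP => x; rewrite /P !inE; do ![case: (_ \in _)].
Qed.

Lemma opt_weight : weight w (union_seq opt) = \sum_(j < k) weight w (P j).
Proof.
have := H_sum setT k (leqnn k); rewrite setIT /H -sizeo take_size => ->.
by apply: eq_bigr => j _; rewrite setIT.
Qed.

Lemma g_weight : weight w (union_seq g) = \sum_(i < k) gain i.
Proof.
have : forall i, (i <= k)%N -> weight w (G i) = \sum_(l < i) gain l.
  elim=> [|i IH] hi; first by rewrite /G union_take0 weight_set0 big_ord0.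
  rewrite big_ord_recr /= -IH ?(ltnW hi) // GS //.
  rewrite (weight_ID _ _ w _ (G i)) setUK; congr (_ + weight w _).
  by apply/setP => x; rewrite !inE; do ![case: (_ \in _)].
by move=> /(_ k (leqnn k)); rewrite /G -sizeg take_size.
Qed.

Lemma D_le i : (i < k)%N -> \sum_(j < k) (rho j i - rho j i.+1) <= gain i.
Proof.
move=> hi; rewrite (eq_bigr (fun j : 'I_k => weight w (P j :&: (nth set0 g i :\: G i)))).
  by rewrite -H_sum // weight_sub // subsetIr.
by move=> j _; rewrite drop_weight.
Qed.


Lemma telescope_ord (f : nat -> R) (n : nat) :
  \sum_(i < n) (f i - f i.+1) = f 0%N - f n.
Proof.
elim: n => [|n IH]; first by rewrite big_ord0 subrr.
by rewrite big_ord_recr /= IH addrA subrK.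
Qed.

Hypothesis k0 : (0 < k)%N.

Lemma main_bound (r' : nat) : (forall S, S \in Rc -> (#|S| <= r'.+1)%N) ->
  (1 - (1 - (r'.+1)%:R^-1) ^+ r'.+1) * weight w (union_seq opt) <= weight w (union_seq g).
Proof.
move=> hr.
set E := gain k.-1.
have hE0 : 0 <= E by apply: gain_ge0.
have hkk : (k.-1 < k)%N by rewrite prednK.
pose Phi (j : nat) := (rho j 0%N - rho j k) + E - E * \sum_(i < k) ((rho j i - rho j i.+1) / gain i).
rewrite opt_weight g_weight mulr_sumr.
apply: le_trans (_ : \sum_(j < k) Phi j <= _).
  apply: ler_sum => j _.
  have hjk : (j < k)%N by apply: ltn_ord.
  have -> : weight w (P j) = rho j 0%N by rewrite /rho /G union_take0 setD0.
  apply: (@part_final R E hE0 r' k (rho j) gain (fun i => #|P j :\: G i|)) => //.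
  - by move=> i hi; apply: rho_mono.
  - by move=> i; apply: rho_ge0.
  - by move=> i hi; apply: rho_le_gain.
  - by move=> i hi; apply: gain_ge_last.
  - have := rho_mono j k.-1 hkk; rewrite prednK // => h; apply: le_trans h _; exact: rho_le_gain.
  - move=> i hi hlt; apply: proper_card; rewrite properEneq; apply/andP; split.
      by apply/eqP => heq; move: hlt; rewrite /rho heq ltxx.
    by apply: setDS; apply: G_sub.
  - by move=> i hi; apply: subset_leq_card; apply: setDS; apply: G_sub.
  - move=> i hpos; rewrite lt0n; apply/eqP => /cards0_eq h; move: hpos.
    by rewrite /rho h weight_set0 ltxx.
  - rewrite /G union_take0 setD0; apply: leq_trans (hr _ (opt_in j hjk)).
    by apply: subset_leq_card; apply: subsetDl.
pose D (i : nat) := \sum_(j < k) (rho j i - rho j i.+1).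
have e1 : \sum_(j < k) Phi j = \sum_(j < k) (rho j 0%N - rho j k) + \sum_(j < k) E
     - E * \sum_(j < k) \sum_(i < k) ((rho j i - rho j i.+1) / gain i).
  by rewrite /Phi sumrB big_split /= mulr_sumr.
have e2 : \sum_(j < k) (rho j 0%N - rho j k) = \sum_(i < k) D i.
  rewrite /D exchange_big /=; apply: eq_bigr => j _.
  by rewrite telescope_ord.
have e3 : \sum_(j < k) \sum_(i < k) ((rho j i - rho j i.+1) / gain i)
    = \sum_(i < k) (D i / gain i).
  by rewrite exchange_big /=; apply: eq_bigr => i _; rewrite /D mulr_suml.
rewrite e1 e2 e3.
have e4 : \sum_(i < k) D i + \sum_(i < k) E - E * \sum_(i < k) (D i / gain i)
    = \sum_(i < k) (D i + E - E * (D i / gain i)).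
  by rewrite sumrB big_split /= mulr_sumr.
rewrite e4; apply: ler_sum => i _.
have hik : (i < k)%N by apply: ltn_ord.
apply: step_ineq => //.
- by apply: sumr_ge0 => j _; rewrite subr_ge0; apply: rho_mono.
- exact: D_le.
- exact: gain_ge_last.
Qed.

End Main.

Theorem corollary4p2 (R : realFieldType) (U : finType) (Rc : {set {set U}})
    (k r : nat) (w : U -> R) :
  (0 < k)%N ->
  (forall x : U, 0 <= w x) ->
  (forall S : {set U}, S \in Rc -> (#|S| <= r)%N) ->
  forall g : seq {set U}, greedy_output w Rc k g ->
  forall opt : seq {set U}, is_k_selection Rc k opt ->
    (1 - (1 - r%:R^-1) ^+ r) * weight w (union_seq opt) <= weight w (union_seq g).
Proof.
move=> k0 w0 hr g hg opt ho.
case: r hr => [|r'] hr.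
  by rewrite invr0 subr0 expr0 subrr mul0r; apply: weight_ge0.
exact: (@main_bound R U Rc k w w0 g opt hg ho k0 r' hr).
Qed.
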